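(* For every rational $m$ with $0<m<1$ there are infinitely many pairwise non-congruent hyperbolic Heron triangles having a right angle and whose area $A$ satisfies $\cos A=\frac{1-m^2}{1+m^2}$, $\sin A=\frac{2m}{1+m^2}$.
   Context: All triangles are non-degenerate, bounded triangles in the hyperbolic plane (curvature $-1$), with side lengths $a,b,c>0$, opposite angles $\alpha,\beta,\gamma>0$, and area $A=\pi-\alpha-\beta-\gamma$. A hyperbolic Heron triangle is one with $e^a,e^b,e^c\in\mathbb{Q}$ and $e^{i\alpha},e^{i\beta},e^{i\gamma},e^{iA}\in\mathbb{Q}[i]$. *)

(* Defs.v *)
From Stdlib Require Import Reals QArith Qreals Lra.
Open Scope R_scope.

Definition is_rat (x : R) : Prop := exists q : Q, Q2R q = x.

(* A complex number x + i y lies in Q[i]. *)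
Definition in_Qi (x y : R) : Prop := is_rat x /\ is_rat y.

(* Data of a triangle: side lengths a b c and opposite angles al be ga. *)
Record htri := mk_htri {
  ta : R; tb : R; tc : R;
  tal : R; tbe : R; tga : R }.

(* A non-degenerate bounded triangle in the hyperbolic plane of curvature -1:
   positive sides, angles in (0, pi), related by the hyperbolic law of
   cosines (which determines the triangle up to isometry; the strict
   triangle inequalities follow from |cos| < 1). *)
Definition is_hyp_triangle (t : htri) : Prop :=
  0 < ta t /\ 0 < tb t /\ 0 < tc t /\
  0 < tal t < PI /\ 0 < tbe t < PI /\ 0 < tga t < PI /\
  cosh (ta t) = cosh (tb t) * cosh (tc t) - sinh (tb t) * sinh (tc t) * cos (tal t) /\
  cosh (tb t) = cosh (tc t) * cosh (ta t) - sinh (tc t) * sinh (ta t) * cos (tbe t) /\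
  cosh (tc t) = cosh (ta t) * cosh (tb t) - sinh (ta t) * sinh (tb t) * cos (tga t).

Definition harea (t : htri) : R := PI - tal t - tbe t - tga t.

Definition is_hyp_heron (t : htri) : Prop :=
  is_hyp_triangle t /\
  is_rat (exp (ta t)) /\ is_rat (exp (tb t)) /\ is_rat (exp (tc t)) /\
  in_Qi (cos (tal t)) (sin (tal t)) /\
  in_Qi (cos (tbe t)) (sin (tbe t)) /\
  in_Qi (cos (tga t)) (sin (tga t)) /\
  in_Qi (cos (harea t)) (sin (harea t)).

Definition has_right_angle (t : htri) : Prop :=
  tal t = PI / 2 \/ tbe t = PI / 2 \/ tga t = PI / 2.

(* Congruence (SSS): same side lengths up to a permutation. *)
Definition hcongruent (t u : htri) : Prop :=
  let a := ta t in let b := tb t in let c := tc t in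
  let a' := ta u in let b' := tb u in let c' := tc u in
  (a = a' /\ b = b' /\ c = c') \/ (a = a' /\ b = c' /\ c = b') \/
  (a = b' /\ b = a' /\ c = c') \/ (a = b' /\ b = c' /\ c = a') \/
  (a = c' /\ b = a' /\ c = b') \/ (a = c' /\ b = b' /\ c = a').

(* Main.v *)
Require Import Defs.
From Stdlib Require Import Reals QArith Qreals Lra Lia ZArith Nsatz Classical ClassicalEpsilon.
Open Scope R_scope.


Lemma rat_Q (q : Q) : is_rat (Q2R q).
Proof. exists q; reflexivity. Qed.

Lemma rat_IZR (z : Z) : is_rat (IZR z).
Proof. exists (inject_Z z). unfold Q2R; simpl. field. Qed.

Lemma rat_0 : is_rat 0. Proof. exact (rat_IZR 0). Qed.
Lemma rat_1 : is_rat 1. Proof. exact (rat_IZR 1). Qed.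

Lemma rat_plus x y : is_rat x -> is_rat y -> is_rat (x + y).
Proof. intros [a <-] [b <-]. exists (a + b)%Q. apply Q2R_plus. Qed.
Lemma rat_mult x y : is_rat x -> is_rat y -> is_rat (x * y).
Proof. intros [a <-] [b <-]. exists (a * b)%Q. apply Q2R_mult. Qed.
Lemma rat_opp x : is_rat x -> is_rat (- x).
Proof. intros [a <-]. exists (- a)%Q. apply Q2R_opp. Qed.
Lemma rat_minus x y : is_rat x -> is_rat y -> is_rat (x - y).
Proof. intros [a <-] [b <-]. exists (a - b)%Q. apply Q2R_minus. Qed.
Lemma rat_inv x : is_rat x -> is_rat (/ x).
Proof.
  intros [a <-]. destruct (Qeq_dec a 0) as [H|H].
  - rewrite (Qeq_eqR _ _ H). replace (Q2R 0) with 0 by (unfold Q2R; simpl; field).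
    rewrite Rinv_0. apply rat_0.
  - exists (/ a)%Q. apply Q2R_inv; auto.
Qed.
Lemma rat_div x y : is_rat x -> is_rat y -> is_rat (x / y).
Proof. intros; unfold Rdiv; apply rat_mult; auto; apply rat_inv; auto. Qed.
Lemma rat_pow x n : is_rat x -> is_rat (x ^ n).
Proof. intros H; induction n; simpl. apply rat_1. apply rat_mult; auto. Qed.
Lemma rat_abs x : is_rat x -> is_rat (Rabs x).
Proof.
  intros H. destruct (Rle_or_lt 0 x).
  - rewrite Rabs_pos_eq; auto.
  - rewrite Rabs_left; auto. apply rat_opp; auto.
Qed.
Lemma rat_INR n : is_rat (INR n).
Proof. rewrite INR_IZR_INZ. apply rat_IZR. Qed.

Ltac rat := repeat (first [ apply rat_plus | apply rat_mult | apply rat_minus | apply rat_opp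
   | apply rat_div | apply rat_inv | apply rat_pow | apply rat_abs | apply rat_Q | apply rat_IZR | apply rat_0 | apply rat_1 | assumption ]).

Definition onE (N x y : R) := y*y = x*x*x - N*x.

Lemma chord_gen N x1 y1 x2 y2 l : onE N x1 y1 -> onE N x2 y2 -> x1 <> x2 ->
  l * (x2 - x1) = y2 - y1 ->
  onE N (l*l - x1 - x2) (l*(x1 - (l*l - x1 - x2)) - y1).
Proof.
  unfold onE; intros H1 H2 Hne Hl.
  assert (Hd: x2 - x1 <> 0) by lra.
  apply (Rmult_eq_reg_r (x2 - x1)); auto.
  nsatz.
Qed.
Lemma dbl_gen N x y l : onE N x y -> y <> 0 ->
  l * (2*y) = 3*x*x - N ->
  onE N (l*l - 2*x) (l*(x - (l*l - 2*x)) - y).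
Proof.
  unfold onE; intros H1 Hne Hl.
  apply (Rmult_eq_reg_r y); auto.
  nsatz.
Qed.


Definition H2 (e : nat) (z : R) := exists a b : Z,
  Z.odd a = true /\ Z.odd b = true /\ z = IZR a / (IZR b * 2 ^ e).

Lemma pow2_IZR e : 2 ^ e = IZR (2 ^ Z.of_nat e)%Z.
Proof. rewrite pow_IZR. reflexivity. Qed.

Lemma odd_nz a : Z.odd a = true -> a <> 0%Z.
Proof. intros H ->. discriminate. Qed.

Lemma odd_pow2 e : (1 <= e)%nat -> Z.odd (2 ^ Z.of_nat e) = false.
Proof.
  intros He. destruct e as [|e]; [lia|].
  rewrite Nat2Z.inj_succ, Z.pow_succ_r by lia.
  rewrite Z.odd_mul. reflexivity.
Qed.

Lemma H2_step e z : (1 <= e)%nat -> H2 e z ->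
  H2 (e + 4) ((z + 1) ^ 4 / (16 * z * (z - 1) ^ 2)).
Proof.
  intros He [a [b [Ha [Hb Hz]]]].
  set (E := (2 ^ Z.of_nat e)%Z).
  assert (HE : Z.odd E = false) by (apply odd_pow2; auto).
  exists ((a + b * E) * (a + b * E) * (a + b * E) * (a + b * E))%Z, (a * b * ((a - b * E) * (a - b * E)))%Z.
  assert (H1 : Z.odd (a + b * E) = true).
  { rewrite Z.odd_add, Z.odd_mul, HE, Ha. destruct (Z.odd b); reflexivity. }
  assert (H2' : Z.odd (a - b * E) = true).
  { rewrite Z.odd_sub, Z.odd_mul, HE, Ha. destruct (Z.odd b); reflexivity. }
  split; [|split].
  - rewrite !Z.odd_mul, H1. reflexivity.
  - rewrite !Z.odd_mul. rewrite Ha, Hb, H2'. reflexivity.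
  - rewrite Hz. rewrite pow_add.
    assert (HEr : 2 ^ e = IZR E) by apply pow2_IZR.
    rewrite HEr.
    replace (2 ^ 4) with 16 by ring.
    rewrite !mult_IZR, ?minus_IZR, ?plus_IZR, ?mult_IZR.
    assert (Hanz : IZR a <> 0) by (apply not_0_IZR; apply odd_nz; auto).
    assert (Hbnz : IZR b <> 0) by (apply not_0_IZR; apply odd_nz; auto).
    assert (HEnz : IZR E <> 0).
    { apply not_0_IZR. unfold E. apply Z.pow_nonzero; lia. }
    assert (Hcnz : IZR a - IZR b * IZR E <> 0).
    { rewrite <- mult_IZR, <- minus_IZR. apply not_0_IZR. apply odd_nz; auto. }

    field. repeat split; auto.
Qed.

Lemma odd_shift_neq a b d : Z.odd a = true -> Z.odd b = true ->
  (a * 2 ^ Z.of_nat (S d) <> b)%Z.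
Proof.
  intros Ha Hb Heq. assert (Z.odd (a * 2 ^ Z.of_nat (S d)) = Z.odd b) by (rewrite Heq; reflexivity).
  rewrite Z.odd_mul, odd_pow2 in H by lia. rewrite Hb in H. destruct (Z.odd a); discriminate.
Qed.

Lemma H2_uniq e1 e2 z : H2 e1 z -> H2 e2 z -> e1 = e2.
Proof.
  intros [a1 [b1 [Ha1 [Hb1 Hz1]]]] [a2 [b2 [Ha2 [Hb2 Hz2]]]].
  assert (Hb1nz : IZR b1 <> 0) by (apply not_0_IZR; apply odd_nz; auto).
  assert (Hb2nz : IZR b2 <> 0) by (apply not_0_IZR; apply odd_nz; auto).
  assert (P1 : 2 ^ e1 <> 0) by (apply pow_nonzero; lra).
  assert (P2 : 2 ^ e2 <> 0) by (apply pow_nonzero; lra).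
  assert (Heq : IZR a1 * IZR b2 * 2 ^ e2 = IZR a2 * IZR b1 * 2 ^ e1).
  { rewrite Hz1 in Hz2. field_simplify in Hz2; auto. 
    apply (Rmult_eq_reg_r (/ (IZR b1 * 2^e1 * IZR b2 * 2^e2))).
    2:{ apply Rinv_neq_0_compat. repeat apply Rmult_integral_contrapositive_currified; auto. }
    transitivity (IZR a1 / (IZR b1 * 2 ^ e1)). field; auto.
    rewrite Hz2. field; auto. }
  destruct (Nat.lt_total e1 e2) as [Hlt|[Heq'|Hlt]]; auto; exfalso.
  - destruct (Nat.le_exists_sub (S e1) e2 Hlt) as [d [Hd _]].
    rewrite Hd, pow_add in Heq.
    assert (Heq2 : IZR a1 * IZR b2 * 2 ^ (S d) = IZR a2 * IZR b1).
    { apply (Rmult_eq_reg_r (2 ^ e1)); auto. replace (S e1) with (e1 + 1)%nat in Heq by lia.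
      rewrite pow_add in Heq. replace (S d) with (d + 1)%nat by lia. rewrite pow_add.
      lra. }
    rewrite pow2_IZR, <- !mult_IZR in Heq2. apply eq_IZR in Heq2.
    apply (odd_shift_neq (a1 * b2) (a2 * b1) d); auto; rewrite Z.odd_mul; 
      [rewrite Ha1, Hb2 | rewrite Ha2, Hb1]; reflexivity.
  - destruct (Nat.le_exists_sub (S e2) e1 Hlt) as [d [Hd _]].
    rewrite Hd, pow_add in Heq.
    assert (Heq2 : IZR a2 * IZR b1 * 2 ^ (S d) = IZR a1 * IZR b2).
    { apply (Rmult_eq_reg_r (2 ^ e2)); auto. replace (S e2) with (e2 + 1)%nat in Heq by lia.
      rewrite pow_add in Heq. replace (S d) with (d + 1)%nat by lia. rewrite pow_add.
      lra. }
    rewrite pow2_IZR, <- !mult_IZR in Heq2. apply eq_IZR in Heq2.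
    apply (odd_shift_neq (a2 * b1) (a1 * b2) d); auto; rewrite Z.odd_mul; 
      [rewrite Ha2, Hb1 | rewrite Ha1, Hb2]; reflexivity.
Qed.

Lemma H2_neq1 e z : (1 <= e)%nat -> H2 e z -> z <> 1.
Proof.
  intros He Hz Hz1. subst z.
  assert (H0 : H2 0 1). { exists 1%Z, 1%Z. split; [reflexivity|split;[reflexivity|]]. simpl. field. }
  pose proof (H2_uniq _ _ _ Hz H0). lia.
Qed.

Lemma H2_nz e z : H2 e z -> z <> 0.
Proof.
  intros [a [b [Ha [Hb Hz]]]] Hz0. rewrite Hz0 in Hz. symmetry in Hz.
  assert (Hbnz : IZR b <> 0) by (apply not_0_IZR; apply odd_nz; auto).
  assert (IZR a <> 0) by (apply not_0_IZR; apply odd_nz; auto).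
  assert (2 ^ e <> 0) by (apply pow_nonzero; lra).
  unfold Rdiv in Hz. apply Rmult_integral in Hz. destruct Hz as [Hz|Hz]; auto.
  revert Hz. apply Rinv_neq_0_compat. apply Rmult_integral_contrapositive_currified; auto.
Qed.


Lemma Z2dec_aux (n : nat) : forall z : Z, (Z.abs z <= Z.of_nat n)%Z -> z <> 0%Z ->
  exists f w, Z.odd w = true /\ z = (2 ^ Z.of_nat f * w)%Z.
Proof.
  induction n as [|n IH]; intros z Hz Hnz.
  - lia.
  - destruct (Z.Even_or_Odd z) as [[b Hb]|Ho].
    + destruct (IH b) as [f [w [Hw Hbw]]]; [rewrite Nat2Z.inj_succ in Hz; lia|lia|].
      exists (S f), w. split; auto. rewrite Nat2Z.inj_succ, Z.pow_succ_r by lia. rewrite Hb, Hbw; ring.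
    + exists 0%nat, z. split. apply Z.odd_spec; auto. simpl. destruct z; reflexivity.
Qed.

Lemma Z2dec z : z <> 0%Z -> exists f w, Z.odd w = true /\ z = (2 ^ Z.of_nat f * w)%Z.
Proof. intros; apply (Z2dec_aux (Z.abs_nat z)); auto. rewrite Nat2Z.inj_abs_nat. lia. Qed.

Lemma sq_odd p : Z.odd p = true -> exists A, (p * p = 8 * A + 1)%Z.
Proof.
  intros Hp. apply Z.odd_spec in Hp. destruct Hp as [a ->].
  destruct (Z.Even_or_Odd a) as [[b ->]|[b ->]].
  - exists (2*b*b + b)%Z. ring.
  - exists (2*b*b + 3*b + 1)%Z. ring.
Qed.

Definition Fz (P2 Q2 : R) := (Q2^2 + 6 * P2 * Q2 + P2^2) ^ 4 /
     (64 * (Q2 - P2) ^ 4 * (Q2 + P2) ^ 2 * (P2 * Q2)).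

Lemma odd2 x : Z.odd (2 * x + 1) = true.
Proof. apply Z.odd_odd. Qed.

Lemma caseA p q : Z.odd p = true -> Z.odd q = true -> (q * q <> p * p)%Z ->
  exists e, (1 <= e)%nat /\ H2 e (Fz (IZR p ^ 2) (IZR q ^ 2)).
Proof.
  intros Hp Hq Hne.
  destruct (sq_odd p Hp) as [A HA]. destruct (sq_odd q Hq) as [B HB].
  destruct (Z2dec (B - A)) as [f [w [Hw Hd]]]; [lia|].
  exists (8 + 4 * f)%nat. split; [lia|].
  set (s1 := (8*(A+B)*(A+B) + 8*(A+B) + 32*A*B + 1)%Z).
  set (r := (4*A + 4*B + 1)%Z).
  exists (s1*s1*s1*s1)%Z, (w*w*w*w*r*r*(p*p)*(q*q))%Z.
  split; [|split].
  - assert (Z.odd s1 = true).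
    { replace s1 with (2 * (4*(A+B)*(A+B) + 4*(A+B) + 16*A*B) + 1)%Z by (unfold s1; ring). apply odd2. }
    rewrite !Z.odd_mul, H. reflexivity.
  - assert (Z.odd r = true).
    { replace r with (2 * (2*A + 2*B) + 1)%Z by (unfold r; ring). apply odd2. }
    rewrite !Z.odd_mul, H, Hw, Hp, Hq. reflexivity.
  - assert (HA' : IZR p * IZR p = 8 * IZR A + 1).
    { rewrite <- mult_IZR, HA, plus_IZR, mult_IZR. reflexivity. }
    assert (HB' : IZR q * IZR q = 8 * IZR B + 1).
    { rewrite <- mult_IZR, HB, plus_IZR, mult_IZR. reflexivity. }
    assert (Hd' : IZR B = IZR A + 2 ^ f * IZR w).
    { rewrite pow2_IZR, <- mult_IZR, <- Hd, minus_IZR. ring. }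
    assert (Hwnz : IZR w <> 0) by (apply not_0_IZR; apply odd_nz; auto).
    assert (Hpnz : IZR p <> 0) by (apply not_0_IZR; apply odd_nz; auto).
    assert (Hqnz : IZR q <> 0) by (apply not_0_IZR; apply odd_nz; auto).
    assert (Hrnz : IZR r <> 0).
    { apply not_0_IZR. apply odd_nz. replace r with (2 * (2*A + 2*B) + 1)%Z by (unfold r; ring). apply odd2. }
    assert (Hfnz : 2 ^ f <> 0) by (apply pow_nonzero; lra).
    assert (X1 : 8 * IZR A + 1 <> 0).
    { rewrite <- HA'. apply Rmult_integral_contrapositive_currified; auto. }
    assert (X2 : 8 * IZR B + 1 <> 0).
    { rewrite <- HB'. apply Rmult_integral_contrapositive_currified; auto. }
    replace (Fz (IZR p ^ 2) (IZR q ^ 2)) with (Fz (8 * IZR A + 1) (8 * IZR B + 1))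
      by (rewrite <- HA', <- HB'; f_equal; ring).
    rewrite !mult_IZR, HA', HB'.
    unfold s1, r in *. repeat rewrite ?mult_IZR, ?plus_IZR in *.
    rewrite pow_add, pow_mult. 
    replace ((2 ^ 4) ^ f) with ((2 ^ f) ^ 4) by (rewrite <- !pow_mult, Nat.mul_comm; reflexivity).
    rewrite Hd' in *. unfold Fz.
    field. repeat split; auto; try (intro HH; apply Hrnz; lra).
    replace (8 * (IZR A + 2 ^ f * IZR w) + 1 - (8 * IZR A + 1)) with (8 * (2 ^ f * IZR w)) by ring.
    repeat apply Rmult_integral_contrapositive_currified; auto; lra.
Qed.

Lemma caseB p q f r : Z.odd (p*p + q*q) = true -> Z.odd r = true -> (1 <= f)%nat ->
  (p * q = 2 ^ Z.of_nat f * r)%Z ->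
  exists e, (1 <= e)%nat /\ H2 e (Fz (IZR p ^ 2) (IZR q ^ 2)).
Proof.
  intros Hs Hr Hf Hpq.
  exists (6 + 2 * f)%nat. split; [lia|].
  set (S := (q*q*(q*q) + 6 * (p*p) * (q*q) + p*p*(p*p))%Z).
  set (D := (q*q - p*p)%Z).
  set (U := (q*q + p*p)%Z).
  assert (HS : Z.odd S = true).
  { replace S with ((p*p+q*q)*(p*p+q*q) + 2 * (2 * (p*p) * (q*q)))%Z by (unfold S; ring).
    rewrite Z.odd_add_mul_2, Z.odd_mul, Hs. reflexivity. }
  assert (HD : Z.odd D = true).
  { replace D with ((p*p+q*q) + 2 * (- (p*p)))%Z by (unfold D; ring).
    rewrite Z.odd_add_mul_2. exact Hs. }
  assert (HU : Z.odd U = true).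
  { replace U with (p*p+q*q)%Z by (unfold U; ring). exact Hs. }
  exists (S*S*S*S)%Z, (D*D*D*D*U*U*r*r)%Z.
  split; [|split].
  - rewrite !Z.odd_mul, HS. reflexivity.
  - rewrite !Z.odd_mul, HD, HU, Hr. reflexivity.
  - assert (Hpq' : IZR p * IZR q = 2 ^ f * IZR r).
    { rewrite pow2_IZR, <- !mult_IZR, Hpq. reflexivity. }
    assert (HSnz : IZR S <> 0) by (apply not_0_IZR; apply odd_nz; auto).
    assert (HDnz : IZR D <> 0) by (apply not_0_IZR; apply odd_nz; auto).
    assert (HUnz : IZR U <> 0) by (apply not_0_IZR; apply odd_nz; auto).
    assert (Hrnz : IZR r <> 0) by (apply not_0_IZR; apply odd_nz; auto).
    assert (Hfnz : 2 ^ f <> 0) by (apply pow_nonzero; lra).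
    assert (E1 : Fz (IZR p ^ 2) (IZR q ^ 2) = IZR S ^ 4 / (64 * IZR D ^ 4 * IZR U ^ 2 * (IZR p * IZR q) ^ 2)).
    { unfold Fz, S, D, U. repeat rewrite ?mult_IZR, ?plus_IZR, ?minus_IZR. f_equal; ring. }
    rewrite E1, Hpq', pow_add, pow_mult.
    replace ((2 ^ 2) ^ f) with ((2 ^ f) ^ 2) by (rewrite <- !pow_mult, Nat.mul_comm; reflexivity).
    rewrite !mult_IZR. field. repeat split; auto.
Qed.

Definition kk (m : R) := (1 - m ^ 2) / m.
Definition NN (m : R) := 16 + 4 * kk m ^ 2.
Definition z0 (m : R) := ((16 + NN m) / (8 * kk m)) ^ 4 / NN m.

Lemma z0_pq (p q : R) : p <> 0 -> q <> 0 -> q ^ 2 - p ^ 2 <> 0 ->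
  z0 (p / q) = Fz (p ^ 2) (q ^ 2).
Proof.
  intros Hp Hq H1.
  assert (0 < (q*p)^2) by (rewrite <- Rsqr_pow2; apply Rsqr_pos_lt; apply Rmult_integral_contrapositive_currified; auto).
  assert (0 < q^2) by (rewrite <- Rsqr_pow2; apply Rsqr_pos_lt; auto).
  assert (0 < p^2) by (rewrite <- Rsqr_pow2; apply Rsqr_pos_lt; auto).
  unfold z0, NN, kk, Fz.
  field. repeat split; auto; try nra.
Qed.

Lemma z0_H2 (m : R) p0 q0 : m = IZR p0 / IZR q0 -> 0 < m < 1 -> p0 <> 0%Z -> q0 <> 0%Z ->
  exists e, (1 <= e)%nat /\ H2 e (z0 m).
Proof.
  intros Hm Hm01 Hp0 Hq0.
  destruct (Z2dec p0 Hp0) as [a [p1 [Hp1 Ep]]].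
  destruct (Z2dec q0 Hq0) as [b [q1 [Hq1 Eq]]].
  assert (Hp1nz : p1 <> 0%Z) by (apply odd_nz; auto).
  assert (Hq1nz : q1 <> 0%Z) by (apply odd_nz; auto).
  assert (gen : forall p q : Z, m = IZR p / IZR q -> p <> 0%Z -> q <> 0%Z ->
     (exists e, (1 <= e)%nat /\ H2 e (Fz (IZR p ^ 2) (IZR q ^ 2))) ->
     exists e, (1 <= e)%nat /\ H2 e (z0 m)).
  { intros p q Hm' Hp Hq [e [He1 He2]]. exists e. split; auto.
    assert (IZR p <> 0) by (apply not_0_IZR; auto).
    assert (IZR q <> 0) by (apply not_0_IZR; auto).
    rewrite Hm', z0_pq; auto.
    intro Hc. assert (m ^ 2 = 1).
    { assert (E : m ^ 2 = IZR p ^ 2 / IZR q ^ 2) by (rewrite Hm'; field; auto).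
      rewrite E. replace (IZR p ^ 2) with (IZR q ^ 2) by lra. field; try apply pow_nonzero; auto. }
    nra. }
  destruct (Nat.lt_total a b) as [Hab|[Hab|Hab]].
  - destruct (Nat.le_exists_sub (S a) b Hab) as [d [Hd _]].
    apply (gen p1 (2 ^ Z.of_nat (S d) * q1)%Z); auto.
    + rewrite Hm, Ep, Eq, Hd, !mult_IZR, <- !pow2_IZR.
      rewrite !pow_add. change (2 ^ S a) with (2 * 2 ^ a). change (2 ^ S d) with (2 * 2 ^ d).
      field. repeat split; try (apply not_0_IZR; auto); apply pow_nonzero; lra.
    + apply Z.neq_mul_0; split; auto. apply Z.pow_nonzero; lia.
    + apply (caseB _ _ (S d) (p1 * q1)); try lia.
      * rewrite Nat2Z.inj_succ, Z.pow_succ_r by lia.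
        replace (p1 * p1 + 2 * 2 ^ Z.of_nat d * q1 * (2 * 2 ^ Z.of_nat d * q1))%Z
          with (p1 * p1 + 2 * (2 * 2 ^ Z.of_nat d * 2 ^ Z.of_nat d * q1 * q1))%Z by ring.
        rewrite Z.odd_add_mul_2, Z.odd_mul, Hp1. reflexivity.
      * rewrite Z.odd_mul, Hp1, Hq1. reflexivity.
  - subst b. apply (gen p1 q1); auto.
    + rewrite Hm, Ep, Eq, !mult_IZR. field. split; [apply not_0_IZR; auto|].
      apply not_0_IZR. apply Z.pow_nonzero; lia.
    + destruct (caseA p1 q1 Hp1 Hq1) as [e He]; [|exists e; auto].
      intro Hc. assert (IZR q1 ^ 2 = IZR p1 ^ 2) by (simpl; rewrite !Rmult_1_r, <- !mult_IZR, Hc; reflexivity).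
      assert (m ^ 2 = 1).
      { rewrite Hm, Ep, Eq, !mult_IZR. 
        assert (IZR q1 <> 0) by (apply not_0_IZR; auto).
        assert (IZR (2 ^ Z.of_nat a) <> 0) by (apply not_0_IZR; apply Z.pow_nonzero; lia).
        assert (E : (IZR (2 ^ Z.of_nat a) * IZR p1 / (IZR (2 ^ Z.of_nat a) * IZR q1)) ^ 2 = IZR p1 ^ 2 / IZR q1 ^ 2) by (field; auto).
        rewrite E, <- H. field; try apply pow_nonzero; auto. }
      nra.
  - destruct (Nat.le_exists_sub (S b) a Hab) as [d [Hd _]].
    apply (gen (2 ^ Z.of_nat (S d) * p1)%Z q1); auto.
    + rewrite Hm, Ep, Eq, Hd, !mult_IZR, <- !pow2_IZR.
      rewrite !pow_add. change (2 ^ S b) with (2 * 2 ^ b). change (2 ^ S d) with (2 * 2 ^ d).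
      field. repeat split; try (apply not_0_IZR; auto); apply pow_nonzero; lra.
    + apply Z.neq_mul_0; split; auto. apply Z.pow_nonzero; lia.
    + apply (caseB _ _ (S d) (p1 * q1)); try lia.
      * rewrite Nat2Z.inj_succ, Z.pow_succ_r by lia.
        replace (2 * 2 ^ Z.of_nat d * p1 * (2 * 2 ^ Z.of_nat d * p1) + q1 * q1)%Z
          with (q1 * q1 + 2 * (2 * 2 ^ Z.of_nat d * 2 ^ Z.of_nat d * p1 * p1))%Z by ring.
        rewrite Z.odd_add_mul_2, Z.odd_mul, Hq1. reflexivity.
      * rewrite Z.odd_mul, Hp1, Hq1. reflexivity.
Qed.


Lemma close_pair (x : nat -> R) (a b : R) : (forall j, a <= x j <= b) ->
  forall d, 0 < d -> exists i j, i <> j /\ Rabs (x i - x j) < d.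
Proof.
  intros Hb d Hd.
  set (E := fun y => forall J, exists j, (J <= j)%nat /\ y <= x j).
  assert (HE : exists y, E y).
  { exists a. intros J. exists J. split; [lia|]. apply Hb. }
  assert (HB : bound E).
  { exists b. intros y Hy. destruct (Hy O) as [j [_ Hj]]. specialize (Hb j). lra. }
  destruct (completeness E HB HE) as [L [HL1 HL2]].
  assert (H1 : exists y, E y /\ L - d/2 < y).
  { apply NNPP. intro Hn.
    assert (is_upper_bound E (L - d/2)).
    { intros y Hy. destruct (Rle_or_lt y (L - d/2)); auto. exfalso. apply Hn. exists y; auto. }
    specialize (HL2 _ H). lra. }
  assert (H2 : exists J, forall j, (J <= j)%nat -> x j < L + d/2).
  { apply NNPP. intro Hn.
    assert (E (L + d/2)).
    { intros J. apply NNPP. intro Hn2. apply Hn. exists J. intros j Hj.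
      destruct (Rlt_or_le (x j) (L + d/2)); auto. exfalso. apply Hn2. exists j; auto. }
    specialize (HL1 _ H). lra. }
  destruct H1 as [y [Hy Hy2]]. destruct H2 as [J HJ].
  destruct (Hy J) as [j1 [Hj1 Hx1]].
  destruct (Hy (S j1)) as [j2 [Hj2 Hx2]].
  exists j1, j2. split; [lia|].
  specialize (HJ j1 Hj1) as H3. assert (H4 : x j2 < L + d/2) by (apply HJ; lia).
  apply Rabs_def1; lra.
Qed.

Lemma Wrel2 k u v l t : v * v = u * u * u - (16 + 4 * (k * k)) * u -> l * (u + 4) = v + 4 * k ->
  t * u = 2 * (k - l) -> u <> 0 -> u + 4 <> 0 ->
  (2 * t ^ 2 - 2 * k * t + u * t ^ 2 - 2) ^ 2 = 4 * (t^4 - 2 * k * t^3 - 6 * t^2 + 2 * k * t + 1).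
Proof.
  intros H1 H2 H3 Hu Hu4.
  assert (HQ : (u + 4) * (l * l * (u + 4) - 8 * k * l + 4 * k * k - u * u + 4 * u) = 0).
  { assert (v = l * (u + 4) - 4 * k) by lra. subst v. nsatz. }
  assert (HQ' : l * l * (u + 4) - 8 * k * l + 4 * k * k - u * u + 4 * u = 0).
  { apply Rmult_integral in HQ. destruct HQ; auto. lra. }
  assert (Hl : l = k - t * u / 2) by lra.
  assert (HR : u * (t * t * u * u + (4 * t * t - 4 * k * t - 4) * u + 4 * k * k + 16) = 0).
  { replace 0 with (4 * (l * l * (u + 4) - 8 * k * l + 4 * k * k - u * u + 4 * u)) by (rewrite HQ'; ring).
    rewrite Hl. field. }
  assert (HR' : t * t * u * u + (4 * t * t - 4 * k * t - 4) * u + 4 * k * k + 16 = 0).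
  { apply Rmult_integral in HR. destruct HR; auto. lra. }
  transitivity (4 * (t^4 - 2 * k * t^3 - 6 * t^2 + 2 * k * t + 1) +
    t * t * (t * t * u * u + (4 * t * t - 4 * k * t - 4) * u + 4 * k * k + 16)).
  - ring.
  - rewrite HR'. ring.
Qed.


Definition dbl (N : R) (P : R * R) : R * R :=
  let (x, y) := P in
  let l := (3 * x * x - N) / (2 * y) in
  (l * l - 2 * x, l * (x - (l * l - 2 * x)) - y).

Section Seq.
Variable m : R.
Hypothesis Hm : 0 < m < 1.
Hypothesis Hmr : is_rat m.

Let k := kk m.
Let N := NN m.
Let M := 2 * (1 + m ^ 2) / m.

Lemma k_pos : 0 < k.
Proof. unfold k, kk. apply Rdiv_lt_0_compat; nra. Qed.

Lemma N_M : N = M * M.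
Proof. unfold N, M, NN, kk. field. lra. Qed.

Lemma M_pos : 0 < M.
Proof. unfold M. apply Rdiv_lt_0_compat; nra. Qed.

Lemma rat_k : is_rat k.
Proof. unfold k, kk. rat. Qed.
Lemma rat_N : is_rat N.
Proof. unfold N, NN. pose proof rat_k. unfold k in H. rat. Qed.
Lemma rat_M : is_rat M.
Proof. unfold M. rat. Qed.

Lemma dbl_spec x y : onE N x y -> y <> 0 -> x <> 0 -> x * x <> N ->
  let P := dbl N (x, y) in
  onE N (fst P) (snd P) /\
  fst P - M = (x * x - 2 * M * x - N) ^ 2 / (4 * (y * y)) /\
  (fst P) ^ 2 / N = ((x^2/N) + 1) ^ 4 / (16 * (x^2/N) * ((x^2/N) - 1) ^ 2).
Proof.
  intros HE Hy Hx HxN. simpl.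
  set (l := (3 * x * x - N) / (2 * y)).
  assert (Hl : l * (2 * y) = 3 * x * x - N) by (unfold l; field; auto).
  split; [apply dbl_gen; auto|].
  assert (HN : N = M * M) by apply N_M.
  assert (Mpos := M_pos).
  unfold onE in HE.
  assert (Hx' : l * l - 2 * x = (x * x + N) ^ 2 / (4 * (y * y))).
  { unfold l. apply (Rmult_eq_reg_r (4 * (y*y))); [|nra]. field_simplify; auto.
    replace (y ^ 2) with (x * x * x - N * x) by (rewrite <- HE; ring). field. }
  assert (Hyy : x * x * x - N * x <> 0) by (rewrite <- HE; intro; apply Hy; nra).
  assert (HxN' : x * x - N <> 0) by (intro; apply HxN; lra).
  assert (0 < N) by (rewrite HN; nra).
  rewrite Hx', HE. split.
  - rewrite HN in *. field. lra.
  - field. repeat split; auto. all: try lra.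
Qed.

Definition Inv (e : nat) (P : R * R) :=
  onE N (fst P) (snd P) /\ is_rat (fst P) /\ is_rat (snd P) /\ M < fst P /\ snd P <> 0 /\
  H2 e ((fst P) ^ 2 / N).

Lemma rat_dbl (x y : R) : is_rat x -> is_rat y -> is_rat (fst (dbl N (x, y))) /\ is_rat (snd (dbl N (x, y))).
Proof. intros Hx Hy. pose proof rat_N. simpl. split; rat. Qed.

Lemma after_dbl (e : nat) (x' y' : R) : (1 <= e)%nat -> onE N x' y' -> M <= x' -> H2 e (x' ^ 2 / N) ->
  M < x' /\ y' <> 0.
Proof.
  intros He HE HM HH.
  assert (HN := N_M). assert (Mp := M_pos).
  assert (Hne : x' <> M).
  { intro Heq. apply (H2_neq1 e _ He HH). rewrite Heq, HN. field. lra. }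
  assert (M < x') by lra. split; auto.
  intro Hy. unfold onE in HE. rewrite Hy in HE.
  assert (x' * (x' * x' - N) = 0) by lra.
  rewrite HN in H0. assert (0 < x' * (x' * x' - M * M)). 
  { apply Rmult_lt_0_compat; nra. }
  lra.
Qed.

Lemma Inv_step (e : nat) (P : R * R) : (1 <= e)%nat -> Inv e P -> Inv (e + 4) (dbl N P).
Proof.
  destruct P as [x y]. intros He [HE [Hrx [Hry [HM [Hy HH]]]]]. simpl fst in *; simpl snd in *.
  assert (HN := N_M). assert (Mp := M_pos).
  assert (Hx : x <> 0) by lra.
  assert (HxN : x * x <> N) by (rewrite HN; intro; nra).
  destruct (dbl_spec x y HE Hy Hx HxN) as [HE' [HM' Hz']].
  destruct (rat_dbl x y Hrx Hry) as [R1 R2].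
  set (P := dbl N (x, y)) in *.
  assert (HH' : H2 (e + 4) (fst P ^ 2 / N)).
  { rewrite Hz'. apply H2_step; auto. }
  assert (M <= fst P).
  { assert (0 <= (x * x - 2 * M * x - N) ^ 2 / (4 * (y * y))).
    { apply Rmult_le_pos. apply pow2_ge_0. left. apply Rinv_0_lt_compat. nra. }
    lra. }
  destruct (after_dbl (e + 4) (fst P) (snd P) ltac:(lia) HE' H HH').
  unfold Inv. repeat split; auto.
Qed.

Definition P0 : R * R := (-4, 4 * k).

Fixpoint Qs (j : nat) : R * R :=
  match j with O => dbl N P0 | S j => dbl N (Qs j) end.

Lemma Inv_0 e0 : (1 <= e0)%nat -> H2 e0 (z0 m) -> Inv e0 (Qs 0).
Proof.
  intros He0 Hz0.
  assert (HN := N_M). assert (Mp := M_pos). assert (kp := k_pos).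
  assert (HNk : N = 16 + 4 * k ^ 2) by reflexivity.
  assert (HE : onE N (-4) (4 * k)) by (unfold onE; rewrite HNk; ring).
  assert (Hy : 4 * k <> 0) by lra.
  assert (Hx : -4 <> 0) by lra.
  assert (HxN : -4 * -4 <> N) by (rewrite HNk; nra).
  destruct (dbl_spec (-4) (4*k) HE Hy Hx HxN) as [HE' [HM' Hz']].
  assert (Hr : is_rat (-4) /\ is_rat (4 * k)) by (pose proof rat_k; split; rat).
  destruct (rat_dbl (-4) (4*k) (proj1 Hr) (proj2 Hr)) as [R1 R2].
  simpl Qs. unfold P0.
  set (P := dbl N (-4, 4 * k)) in *.
  assert (HH' : H2 e0 (fst P ^ 2 / N)).
  { rewrite Hz'. replace ((((-4) ^ 2 / N + 1) ^ 4 / (16 * ((-4) ^ 2 / N) * ((-4) ^ 2 / N - 1) ^ 2))) with (z0 m); auto.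
    unfold z0. fold k. fold N. rewrite HNk. field. assert (0 < k ^ 2) by (apply pow_lt; lra). repeat split; lra. }
  assert (M <= fst P).
  { assert (0 <= (-4 * -4 - 2 * M * -4 - N) ^ 2 / (4 * (4 * k * (4 * k)))).
    { apply Rmult_le_pos. apply pow2_ge_0. left. apply Rinv_0_lt_compat. nra. }
    lra. }
  destruct (after_dbl e0 (fst P) (snd P) He0 HE' H HH').
  unfold Inv. repeat split; auto.
Qed.

Lemma Inv_all e0 : (1 <= e0)%nat -> H2 e0 (z0 m) -> forall j, Inv (e0 + 4 * j) (Qs j).
Proof.
  intros He0 Hz0 j. induction j.
  - replace (e0 + 4 * 0)%nat with e0 by lia. apply Inv_0; auto.
  - simpl Qs. replace (e0 + 4 * S j)%nat with (e0 + 4 * j + 4)%nat by lia.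
    apply Inv_step; auto. lia.
Qed.

Lemma Qs_distinct e0 : (1 <= e0)%nat -> H2 e0 (z0 m) -> forall i j, i <> j -> fst (Qs i) <> fst (Qs j).
Proof.
  intros He0 Hz0 i j Hij Heq.
  destruct (Inv_all e0 He0 Hz0 i) as [_ [_ [_ [_ [_ Hi]]]]].
  destruct (Inv_all e0 He0 Hz0 j) as [_ [_ [_ [_ [_ Hj]]]]].
  rewrite Heq in Hi. pose proof (H2_uniq _ _ _ Hi Hj). lia.
Qed.

Lemma onE_pos (u v : R) : onE N u v -> M < u -> v <> 0.
Proof.
  intros HE Hu Hv. assert (HN := N_M). assert (Mp := M_pos). unfold onE in HE.
  rewrite Hv, HN in HE. assert (0 < u * (u * u - M * M)) by (apply Rmult_lt_0_compat; nra). lra.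
Qed.

Lemma onE_neg (u v : R) : onE N u v -> onE N u (- v).
Proof. unfold onE. intros H. lra. Qed.

Lemma onE_abs (u v : R) : onE N u v -> onE N u (Rabs v).
Proof.
  intros H. destruct (Rle_or_lt 0 v). rewrite Rabs_pos_eq; auto. rewrite Rabs_left; auto. apply onE_neg; auto.
Qed.

Lemma big_point e0 : (1 <= e0)%nat -> H2 e0 (z0 m) -> forall K,
  exists u v, onE N u v /\ is_rat u /\ is_rat v /\ K < u /\ v < 0.
Proof.
  intros He0 Hz0 K.
  assert (HN := N_M). assert (Mp := M_pos).
  set (K' := Rmax K M + 1).
  assert (HK1 : K <= Rmax K M) by apply Rmax_l. assert (HK2 : M <= Rmax K M) by apply Rmax_r.
  assert (Hinv := Inv_all e0 He0 Hz0).
  assert (fin : forall u v, onE N u v -> is_rat u -> is_rat v -> K' < u ->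
      exists u v, onE N u v /\ is_rat u /\ is_rat v /\ K < u /\ v < 0).
  { intros u v HE Hu Hv HKu. exists u, (- Rabs v). split; [|split; [|split; [|split]]]; auto.
    - apply onE_neg, onE_abs; auto.
    - rat.
    - unfold K' in HKu. lra.
    - assert (v <> 0) by (apply (onE_pos u v); auto; unfold K' in HKu; lra).
      assert (0 < Rabs v) by (apply Rabs_pos_lt; auto). lra. }
  destruct (classic (exists j, K' < fst (Qs j))) as [[j Hj]|Hno].
  - destruct (Hinv j) as [HE [Hx [Hy _]]]. apply (fin _ _ HE Hx Hy Hj).
  - assert (Hb : forall j, M <= fst (Qs j) <= K').
    { intros j. destruct (Hinv j) as [_ [_ [_ [HM _]]]]. split; [lra|].
      destruct (Rle_or_lt (fst (Qs j)) K'); auto. exfalso; apply Hno; exists j; auto. }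
    assert (HK'p : 0 < K') by (unfold K'; lra).
    assert (Hd : 0 < 2 * N / (3 * K')) by (apply Rdiv_lt_0_compat; nra).
    destruct (close_pair (fun j => fst (Qs j)) M K' Hb _ Hd) as [i [j [Hij Hclose]]].
    simpl in Hclose.
    assert (Hne := Qs_distinct e0 He0 Hz0 i j Hij).
    destruct (Hinv i) as [HEi [Hxi [Hyi [HMi [Hyi0 _]]]]].
    destruct (Hinv j) as [HEj [Hxj [Hyj [HMj [Hyj0 _]]]]].
    pose proof (Hb i) as Bi. pose proof (Hb j) as Bj.
    destruct (Qs i) as [xi yi]. destruct (Qs j) as [xj yj]. simpl in *.
    set (Yi := Rabs yi). set (Yj := Rabs yj).
    assert (HYi : 0 < Yi) by (apply Rabs_pos_lt; auto).
    assert (HYj : 0 < Yj) by (apply Rabs_pos_lt; auto).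
    assert (HEi' : onE N xi Yi) by (apply onE_abs; auto).
    assert (HEj' : onE N xj (- Yj)) by (apply onE_neg, onE_abs; auto).
    set (l := (- Yj - Yi) / (xj - xi)).
    assert (Hl : l * (xj - xi) = - Yj - Yi) by (unfold l; field; lra).
    assert (HD := chord_gen N xi Yi xj (- Yj) l HEi' HEj' Hne Hl).
    apply (fin _ _ HD).
    + unfold l; rat.
    + unfold l; rat.
    +
      set (d := xi - xj).
      assert (Hdnz : d <> 0) by (unfold d; lra).
      assert (Had : 0 < Rabs d) by (apply Rabs_pos_lt; auto).
      assert (Hadl : Rabs d < 2 * N / (3 * K')) by exact Hclose.
      set (g := xi * xi + xi * xj + xj * xj - N).
      assert (Hg : 2 * N <= g) by (unfold g; rewrite HN; nra).
      assert (Hdiff : Yi * Yi - Yj * Yj = d * g).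
      { unfold onE in HEi', HEj'. unfold d, g. nra. }
      assert (Hsq : Rabs d * g <= (Yi + Yj) * (Yi + Yj)).
      { assert (Rabs (Yi * Yi - Yj * Yj) <= (Yi + Yj) * (Yi + Yj)).
        { destruct (Rle_or_lt Yj Yi).
          - rewrite Rabs_pos_eq by nra. nra.
          - rewrite Rabs_left by nra. nra. }
        rewrite Hdiff, Rabs_mult, (Rabs_pos_eq g) in H by nra. exact H. }
      assert (Hl2 : l * l * (d * d) = (Yi + Yj) * (Yi + Yj)).
      { replace (d * d) with ((xj - xi) * (xj - xi)) by (unfold d; ring).
        replace ((Yi + Yj) * (Yi + Yj)) with ((- Yj - Yi) * (- Yj - Yi)) by ring.
        rewrite <- Hl. ring. }
      assert (Hdd : d * d = Rabs d * Rabs d) by (destruct (Rle_or_lt 0 d); [rewrite Rabs_pos_eq by lra | rewrite Rabs_left by lra]; ring).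
      assert (Hll : 2 * N <= l * l * Rabs d).
      { apply (Rmult_le_reg_r (Rabs d)); auto. replace (l * l * Rabs d * Rabs d) with (l * l * (d * d)) by (rewrite Hdd; ring). rewrite Hl2. nra. }
      assert (HNp : 0 < N) by nra.
      assert (3 * K' < l * l).
      { assert (2 * N = (2 * N / (3 * K')) * (3 * K')) by (field; lra).
        assert (l * l * Rabs d < l * l * (2 * N / (3 * K')) \/ l * l = 0) by (destruct (Req_dec (l*l) 0); [right; auto | left; apply Rmult_lt_compat_l; auto; nra]).
        destruct H0 as [H0|H0]; [|rewrite H0 in Hll; nra].
        nra. }
      lra.
Qed.

Definition gq (t : R) := t^4 - 2 * k * t^3 - 6 * t^2 + 2 * k * t + 1.

Lemma small_t (tau : R) : 0 < tau ->
  (forall K, exists u v, onE N u v /\ is_rat u /\ is_rat v /\ K < u /\ v < 0) ->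
  exists t W, is_rat t /\ is_rat W /\ 0 < t < tau /\ W ^ 2 = gq t.
Proof.
  intros Ht Hbig.
  assert (kp := k_pos). assert (HN := N_M). assert (Mp := M_pos).
  assert (HNp : 0 < N) by nra.
  destruct (Hbig (16 / tau ^ 2 + 4 * k / tau + 1)) as [u [v [HE [Hu [Hv [HK Hv0]]]]]].
  assert (A1 : 0 < 16 / tau ^ 2) by (apply Rdiv_lt_0_compat; [lra | apply pow_lt; lra]).
  assert (A2 : 0 < 4 * k / tau) by (apply Rdiv_lt_0_compat; lra).
  assert (Hu0 : 0 < u) by lra.
  set (l := (v + 4 * k) / (u + 4)).
  assert (Hl : l * (u + 4) = v + 4 * k) by (unfold l; field; lra).
  set (t := 2 * (k - l) / u).
  assert (Htu : t * u = 2 * (k - l)) by (unfold t; field; lra).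
  exists t, ((2 * t ^ 2 - 2 * k * t + u * t ^ 2 - 2) / 2).
  split; [unfold t, l; pose proof rat_k; rat|].
  split; [unfold t, l; pose proof rat_k; rat|].
  split.
  - assert (Hlk : l < k).
    { assert (l * (u + 4) < k * (u + 4)) by nra. nra. }
    split.
    + unfold t. apply Rdiv_lt_0_compat; lra.
    +
      set (w := - v).
      assert (Hw : 0 < w) by (unfold w; lra).
      assert (Hw2 : w * w <= u * u * u) by (unfold w, onE in *; nra).
      assert (Hu1 : 16 <= tau * tau * u).
      { assert (16 / tau ^ 2 < u) by lra.
        assert (16 = 16 / tau ^ 2 * (tau * tau)) by (field; lra). nra. }
      assert (Hu2 : 4 * k <= tau * u).
      { assert (4 * k / tau < u) by lra.
        assert (4 * k = 4 * k / tau * tau) by (field; lra). nra. }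
      assert (Hw3 : w <= tau * u * u / 4).
      { assert (w * w <= (tau * u * u / 4) * (tau * u * u / 4)) by nra.
        assert (0 <= tau * u * u / 4) by (apply Rmult_le_pos; [|lra]; apply Rmult_le_pos; nra).
        nra. }
      assert (Hkl : (k - l) * (u + 4) = k * u + w) by (unfold w; lra).
      assert (Hkl2 : (k - l) * u < k * u + w) by nra.
      assert (2 * (k - l) * u < tau * u * u) by nra.
      assert (t * u < tau * u) by nra.
      nra.
  - apply (Rmult_eq_reg_r 4); [|lra].
    replace (((2 * t ^ 2 - 2 * k * t + u * t ^ 2 - 2) / 2) ^ 2 * 4) with ((2 * t ^ 2 - 2 * k * t + u * t ^ 2 - 2) ^ 2) by field.
    unfold gq. rewrite (Wrel2 k u v l t); try lra.
    unfold onE in HE. unfold N, NN in HE. fold k in HE. rewrite HE. ring.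
Qed.
End Seq.


Lemma hyp_ln (C S : R) : 0 < C -> 0 < S -> C ^ 2 - S ^ 2 = 1 ->
  cosh (ln (C + S)) = C /\ sinh (ln (C + S)) = S /\ exp (ln (C + S)) = C + S /\ 0 < ln (C + S).
Proof.
  intros HC HS H.
  assert (HE : 0 < C + S) by lra.
  assert (He : exp (ln (C + S)) = C + S) by (apply exp_ln; auto).
  assert (Hm : exp (- ln (C + S)) = C - S).
  { rewrite exp_Ropp, He. apply (Rmult_eq_reg_l (C + S)); [|lra]. rewrite Rinv_r by lra. nra. }
  unfold cosh, sinh. rewrite He, Hm. split; [field|split; [field|split; auto]].
  rewrite <- ln_1. apply ln_increasing; [lra|]. nra.
Qed.

Lemma cos_2atan x : cos (2 * atan x) = (1 - x^2) / (1 + x^2).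
Proof.
  rewrite cos_2a, cos_atan, sin_atan.
  assert (0 < 1 + x²) by (unfold Rsqr; nra).
  assert (Hs : sqrt (1 + x²) * sqrt (1 + x²) = 1 + x²) by (apply sqrt_sqrt; lra).
  assert (sqrt (1 + x²) <> 0) by (intro H0; rewrite H0 in Hs; lra).
  unfold Rsqr in *. field_simplify; auto. replace (sqrt (1 + x * x) ^ 2) with (1 + x * x) by (rewrite <- Rsqr_pow2; unfold Rsqr; symmetry; exact Hs). field. nra. nra.
Qed.

Lemma sin_2atan x : sin (2 * atan x) = 2 * x / (1 + x^2).
Proof.
  rewrite sin_2a, cos_atan, sin_atan.
  assert (0 < 1 + x²) by (unfold Rsqr; nra).
  assert (Hs : sqrt (1 + x²) * sqrt (1 + x²) = 1 + x²) by (apply sqrt_sqrt; lra).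
  assert (sqrt (1 + x²) <> 0) by (intro H0; rewrite H0 in Hs; lra).
  unfold Rsqr in *. field_simplify; auto. replace (sqrt (1 + x * x) ^ 2) with (1 + x * x) by (rewrite <- Rsqr_pow2; unfold Rsqr; symmetry; exact Hs). field. nra. nra.
Qed.

Lemma atan_pos x : 0 < x -> 0 < atan x.
Proof. intros. rewrite <- atan_0. apply atan_increasing; auto. Qed.

Lemma atan_lt_PI4 x : x < 1 -> atan x < PI / 4.
Proof. intros. rewrite <- atan_1. apply atan_increasing; auto. Qed.


Section Tri.
Variables m t Wa : R.
Hypothesis Hm : 0 < m < 1.
Hypothesis Ht : 0 < t < (1 - m ^ 2) / 16.
Hypothesis HWa : 0 <= Wa.
Let k := (1 - m ^ 2) / m.
Hypothesis Hrm : is_rat m.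
Hypothesis Hrt : is_rat t.
Hypothesis Hrw : is_rat Wa.
Hypothesis HW : Wa ^ 2 = t^4 - 2 * k * t^3 - 6 * t^2 + 2 * k * t + 1.

Let cphi := (1 - m^2)/(1+m^2).
Let sphi := 2*m/(1+m^2).
Let ca := (1-t^2)/(1+t^2).
Let sa := 2*t/(1+t^2).
Let cb := sphi*ca + cphi*sa.
Let sb := cphi*ca - sphi*sa.
Let Sc := sphi*Wa/((1+t^2)*sa*sb).
Let Cha := ca/sb.
Let Chb := cb/sa.
Let Chc := ca*cb/(sa*sb).

Lemma t_small : t < 1/16.
Proof. assert ((1 - m^2)/16 < 1/16). { unfold Rdiv. apply Rmult_lt_compat_r; nra. } lra. Qed.

Lemma sa_pos : 0 < sa.
Proof. unfold sa. apply Rdiv_lt_0_compat; nra. Qed.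
Lemma ca_pos : 0 < ca.
Proof. pose proof t_small. unfold ca. apply Rdiv_lt_0_compat; nra. Qed.
Lemma sa_lt1 : sa < (1 - m^2) / 8.
Proof.
  unfold sa. apply (Rmult_lt_reg_r (1 + t^2)); [nra|].
  unfold Rdiv at 1. rewrite Rmult_assoc, Rinv_l, Rmult_1_r by nra.
  assert (0 < t^2) by nra. assert ((1 - m^2)/8 = 2 * ((1 - m^2)/16)) by field. nra.
Qed.
Lemma sb_big : (1 - m^2) / 6 < sb.
Proof.
  pose proof t_small.
  unfold sb, cphi, sphi, ca, sa.
  replace ((1 - m ^ 2) / (1 + m ^ 2) * ((1 - t ^ 2) / (1 + t ^ 2)) - 2 * m / (1 + m ^ 2) * (2 * t / (1 + t ^ 2)))
    with (((1 - m^2) * (1 - t^2) - 4 * m * t) / ((1 + m^2) * (1 + t^2))) by (field; nra).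
  apply (Rmult_lt_reg_r ((1 + m^2) * (1 + t^2))); [nra|].
  unfold Rdiv at 2. rewrite Rmult_assoc, Rinv_l, Rmult_1_r by nra.
  assert (16 * t < 1 - m^2) by (unfold Rdiv in Ht; nra).
  nra.
Qed.
Lemma sb_pos : 0 < sb.
Proof. pose proof sb_big. assert (0 < (1 - m^2)/6) by (unfold Rdiv; nra). lra. Qed.
Lemma cb_pos : 0 < cb.
Proof.
  pose proof sa_pos. pose proof ca_pos. unfold cb, sphi, cphi.
  assert (0 < 2 * m / (1 + m^2)) by (apply Rdiv_lt_0_compat; nra).
  assert (0 < (1 - m^2) / (1 + m^2)) by (apply Rdiv_lt_0_compat; nra).
  nra.
Qed.
Lemma W_pos : 0 < Wa.
Proof.
  pose proof t_small. assert (0 < k) by (unfold k; apply Rdiv_lt_0_compat; nra).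
  assert (0 < Wa ^ 2).
  { rewrite HW. assert (0 <= 2 * k * t * (1 - t^2)) by (apply Rmult_le_pos; [|nra]; nra). nra. }
  destruct (Rle_lt_or_eq_dec 0 Wa HWa); auto. subst. simpl in H1. lra.
Qed.

Lemma sb_num : 0 < (1 - m ^ 2) * (1 - t ^ 2) - 2 * m * (2 * t).
Proof.
  pose proof sb_pos. unfold sb, cphi, sphi, ca, sa in H.
  replace ((1 - m ^ 2) / (1 + m ^ 2) * ((1 - t ^ 2) / (1 + t ^ 2)) - 2 * m / (1 + m ^ 2) * (2 * t / (1 + t ^ 2)))
    with (((1 - m ^ 2) * (1 - t ^ 2) - 2 * m * (2 * t)) * / ((1 + m^2) * (1 + t^2))) in H by (field; nra).
  assert (0 < / ((1 + m^2) * (1 + t^2))) by (apply Rinv_0_lt_compat; nra).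
  nra.
Qed.

Ltac nz := pose proof sb_num; pose proof Hm; pose proof Ht; repeat split; nra.

Lemma Sc_sq : Sc * Sc = sphi^2 * (t^4 - 2 * k * t^3 - 6 * t^2 + 2 * k * t + 1) / ((1+t^2)^2 * sa^2 * sb^2).
Proof.
  pose proof sa_pos. pose proof sb_pos. rewrite <- HW. unfold Sc. field. repeat split; nra.
Qed.

Lemma I1a : Cha ^ 2 - (sa * Sc) ^ 2 = 1.
Proof.
  pose proof sa_pos. pose proof sb_pos.
  replace ((sa * Sc) ^ 2) with (sa ^ 2 * (Sc * Sc)) by ring. rewrite Sc_sq.
  unfold Cha, sb, sa, ca, sphi, cphi, k. field. nz.
Qed.

Lemma I1b : Chb ^ 2 - (sb * Sc) ^ 2 = 1.
Proof.
  pose proof sa_pos. pose proof sb_pos.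
  replace ((sb * Sc) ^ 2) with (sb ^ 2 * (Sc * Sc)) by ring. rewrite Sc_sq.
  unfold Chb, cb, sb, sa, ca, sphi, cphi, k. field. nz.
Qed.
Lemma I1c : Chc ^ 2 - Sc ^ 2 = 1.
Proof.
  pose proof sa_pos. pose proof sb_pos.
  replace (Sc ^ 2) with (Sc * Sc) by ring. rewrite Sc_sq.
  unfold Chc, cb, sb, sa, ca, sphi, cphi, k. field. nz.
Qed.
Lemma LCa : Cha = Chb * Chc - (sb * Sc) * Sc * ca.
Proof.
  pose proof sa_pos. pose proof sb_pos.
  replace ((sb * Sc) * Sc * ca) with (sb * ca * (Sc * Sc)) by ring. rewrite Sc_sq.
  unfold Cha, Chb, Chc, cb, sb, sa, ca, sphi, cphi, k. field. nz.
Qed.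
Lemma LCb : Chb = Chc * Cha - Sc * (sa * Sc) * cb.
Proof.
  pose proof sa_pos. pose proof sb_pos.
  replace (Sc * (sa * Sc) * cb) with (sa * cb * (Sc * Sc)) by ring. rewrite Sc_sq.
  unfold Cha, Chb, Chc, cb, sb, sa, ca, sphi, cphi, k. field. nz.
Qed.
Lemma LCc : Chc = Cha * Chb.
Proof.
  pose proof sa_pos. pose proof sb_pos.
  unfold Cha, Chb, Chc. field. nz.
Qed.

Definition tri : htri :=
  mk_htri (ln (Cha + sa * Sc)) (ln (Chb + sb * Sc)) (ln (Chc + Sc))
          (2 * atan t) (PI / 2 - 2 * atan m - 2 * atan t) (PI / 2).

Lemma Sc_pos : 0 < Sc.
Proof.
  pose proof sa_pos. pose proof sb_pos. pose proof W_pos.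
  unfold Sc. apply Rdiv_lt_0_compat.
  - apply Rmult_lt_0_compat; auto. unfold sphi; apply Rdiv_lt_0_compat; nra.
  - apply Rmult_lt_0_compat; [apply Rmult_lt_0_compat|]; nra.
Qed.

Lemma tri_facts :
  cosh (ta tri) = Cha /\ sinh (ta tri) = sa * Sc /\ exp (ta tri) = Cha + sa * Sc /\ 0 < ta tri /\
  cosh (tb tri) = Chb /\ sinh (tb tri) = sb * Sc /\ exp (tb tri) = Chb + sb * Sc /\ 0 < tb tri /\
  cosh (tc tri) = Chc /\ sinh (tc tri) = Sc /\ exp (tc tri) = Chc + Sc /\ 0 < tc tri.
Proof.
  pose proof sa_pos. pose proof sb_pos. pose proof Sc_pos. pose proof ca_pos. pose proof cb_pos.
  assert (0 < Cha) by (unfold Cha; apply Rdiv_lt_0_compat; auto).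
  assert (0 < Chb) by (unfold Chb; apply Rdiv_lt_0_compat; auto).
  assert (0 < Chc) by (unfold Chc; apply Rdiv_lt_0_compat; apply Rmult_lt_0_compat; auto).
  destruct (hyp_ln Cha (sa * Sc)) as [A1 [A2 [A3 A4]]]; auto. apply Rmult_lt_0_compat; auto. apply I1a.
  destruct (hyp_ln Chb (sb * Sc)) as [B1 [B2 [B3 B4]]]; auto. apply Rmult_lt_0_compat; auto. apply I1b.
  destruct (hyp_ln Chc Sc) as [C1 [C2 [C3 C4]]]; auto. apply I1c.
  simpl. tauto.
Qed.

Lemma tri_angles :
  cos (tal tri) = ca /\ sin (tal tri) = sa /\ cos (tbe tri) = cb /\ sin (tbe tri) = sb /\
  cos (harea tri) = cphi /\ sin (harea tri) = sphi /\
  0 < tal tri < PI /\ 0 < tbe tri < PI /\ 0 < tga tri < PI.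
Proof.
  assert (Ea : harea tri = 2 * atan m). { unfold harea, tri. cbn [tal tbe tga]. lra. }
  assert (cp : cos (2 * atan m) = cphi) by (unfold cphi; apply cos_2atan).
  assert (sp : sin (2 * atan m) = sphi) by (unfold sphi; apply sin_2atan).
  assert (ct : cos (2 * atan t) = ca) by (unfold ca; apply cos_2atan).
  assert (st : sin (2 * atan t) = sa) by (unfold sa; apply sin_2atan).
  assert (Eb : tbe tri = PI / 2 - (2 * atan m + 2 * atan t)) by (unfold tri; cbn [tbe]; lra).
  assert (cbe : cos (tbe tri) = cb).
  { rewrite Eb, cos_shift, sin_plus, cp, sp, ct, st. unfold cb. ring. }
  assert (sbe : sin (tbe tri) = sb).
  { rewrite Eb, sin_shift, cos_plus, cp, sp, ct, st. unfold sb. ring. }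
  pose proof t_small.
  assert (0 < atan t) by (apply atan_pos; lra).
  assert (atan t < PI / 4) by (apply atan_lt_PI4; lra).
  assert (0 < atan m) by (apply atan_pos; lra).
  assert (atan m < PI / 4) by (apply atan_lt_PI4; lra).
  pose proof PI_RGT_0.
  split; [simpl; auto|]. split; [simpl; auto|]. split; auto. split; auto.
  rewrite Ea. split; auto. split; auto.
  split; [simpl; lra|].
  split; [|simpl; lra].
  split; [|rewrite Eb; lra].
  destruct (Rle_or_lt (tbe tri) 0) as [Hle|]; auto.
  exfalso. pose proof sb_pos as Hsb. rewrite <- sbe in Hsb.
  destruct (Req_dec (tbe tri) 0) as [Heq|Hne].
  - rewrite Heq, sin_0 in Hsb. lra.
  - assert (sin (tbe tri) < 0) by (apply sin_lt_0_var; [rewrite Eb; lra | lra]). lra.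
Qed.

Lemma tri_heron : is_hyp_heron tri /\ has_right_angle tri /\
  cos (harea tri) = (1 - m ^ 2) / (1 + m ^ 2) /\ sin (harea tri) = 2 * m / (1 + m ^ 2).
Proof.
  destruct tri_facts as [A1 [A2 [A3 [A4 [B1 [B2 [B3 [B4 [C1 [C2 [C3 C4]]]]]]]]]]].
  destruct tri_angles as [a1 [a2 [b1 [b2 [h1 [h2 [r1 [r2 r3]]]]]]]].
  split; [|split; [right; right; reflexivity | split; auto]].
  assert (rk : is_rat k) by (unfold k; rat).
  assert (rcp : is_rat cphi) by (unfold cphi; rat).
  assert (rsp : is_rat sphi) by (unfold sphi; rat).
  assert (rca : is_rat ca) by (unfold ca; rat).
  assert (rsa : is_rat sa) by (unfold sa; rat).
  assert (rcb : is_rat cb) by (unfold cb; rat).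
  assert (rsb : is_rat sb) by (unfold sb; rat).
  assert (rSc : is_rat Sc) by (unfold Sc; rat).
  unfold is_hyp_heron, is_hyp_triangle, in_Qi.
  rewrite A1, A2, A3, B1, B2, B3, C1, C2, C3, a1, a2, b1, b2, h1, h2.
  simpl tga. rewrite cos_PI2, sin_PI2.
  repeat split; auto; try lra.
  - apply LCa.
  - apply LCb.
  - rewrite Rmult_0_r, Rminus_0_r. apply LCc.
  - unfold Cha; rat.
  - unfold Chb; rat.
  - unfold Chc; rat.
  - rat.
  - rat.
Qed.

Lemma tri_sinh : sinh (ta tri) = sa * Sc /\ sinh (tb tri) = sb * Sc /\ sinh (tc tri) = Sc /\ 0 < Sc /\
  0 < sa < 1 /\ (1 - m^2) / 6 < sb < 1 /\ sa < (1 - m^2) / 8 /\ sa = 2 * t / (1 + t ^ 2).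
Proof.
  destruct tri_facts as [A1 [A2 [A3 [A4 [B1 [B2 [B3 [B4 [C1 [C2 [C3 C4]]]]]]]]]]].
  pose proof sa_pos. pose proof sb_big. pose proof sa_lt1. pose proof Sc_pos. pose proof t_small.
  assert (0 < (1 - m^2)/8 < 1) by (split; unfold Rdiv; nra).
  repeat split; auto; try lra.
  unfold sb, cphi, sphi, ca.
  assert (0 < 2 * m / (1 + m ^ 2)) by (apply Rdiv_lt_0_compat; nra).
  assert ((1 - m ^ 2) / (1 + m ^ 2) < 1).
  { apply (Rmult_lt_reg_r (1 + m^2)); [nra|]. unfold Rdiv. rewrite Rmult_assoc, Rinv_l; nra. }
  assert ((1 - t ^ 2) / (1 + t ^ 2) <= 1).
  { apply (Rmult_le_reg_r (1 + t^2)); [nra|]. unfold Rdiv. rewrite Rmult_assoc, Rinv_l; nra. }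
  assert (0 < (1 - t ^ 2) / (1 + t ^ 2)) by (apply Rdiv_lt_0_compat; nra).
  assert (0 < (1 - m ^ 2) / (1 + m ^ 2)) by (apply Rdiv_lt_0_compat; nra).
  fold sa. nra.
Qed.
End Tri.


Lemma noncong (T1 T2 : htri) (sa1 sb1 sa2 sb2 : R) :
  sinh (ta T1) = sa1 * sinh (tc T1) -> sinh (tb T1) = sb1 * sinh (tc T1) -> 0 < sinh (tc T1) ->
  sinh (ta T2) = sa2 * sinh (tc T2) -> sinh (tb T2) = sb2 * sinh (tc T2) -> 0 < sinh (tc T2) ->
  0 < sa1 < 1 -> 0 < sb1 < 1 -> 0 < sa2 < 1 -> 0 < sb2 < 1 ->
  sa1 < sb2 -> sa2 < sb1 -> sa1 <> sa2 -> ~ hcongruent T1 T2.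
Proof.
  intros A1 B1 C1 A2 B2 C2 r1 r2 r3 r4 l1 l2 ne.
  unfold hcongruent.
  intros [[Ha [Hb Hc]]|[[Ha [Hb Hc]]|[[Ha [Hb Hc]]|[[Ha [Hb Hc]]|[[Ha [Hb Hc]]|[Ha [Hb Hc]]]]]]];
  rewrite ?Ha, ?Hb, ?Hc in *.
  - apply ne. rewrite A2 in A1. apply (Rmult_eq_reg_r (sinh (tc T2))); lra.
  - nra.
  - rewrite A1 in B2. assert (sa1 = sb2) by (apply (Rmult_eq_reg_r (sinh (tc T2))); lra). lra.
  - nra.
  - nra.
  - nra.
Qed.

Theorem mainTheorem3 (m : Q) (hm0 : (0 < m)%Q) (hm1 : (m < 1)%Q) :
  exists T : nat -> htri,
    (forall n : nat,
       is_hyp_heron (T n) /\ has_right_angle (T n) /\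
       cos (harea (T n)) = (1 - Q2R m ^ 2) / (1 + Q2R m ^ 2) /\
       sin (harea (T n)) = 2 * Q2R m / (1 + Q2R m ^ 2)) /\
    (forall i j : nat, i <> j -> ~ hcongruent (T i) (T j)).
Proof.
  set (mr := Q2R m).
  assert (Hm : 0 < mr < 1).
  { split.
    - replace 0 with (Q2R 0) by (unfold Q2R; simpl; field). apply Qlt_Rlt; auto.
    - replace 1 with (Q2R 1) by (unfold Q2R; simpl; field). apply Qlt_Rlt; auto. }
  assert (Hmr : is_rat mr) by apply rat_Q.
  assert (Hpq : mr = IZR (Qnum m) / IZR (Z.pos (Qden m))) by reflexivity.
  assert (Hn0 : Qnum m <> 0%Z).
  { intro H0. rewrite H0 in Hpq. unfold Rdiv in Hpq. rewrite Rmult_0_l in Hpq. lra. }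
  destruct (z0_H2 mr _ _ Hpq Hm Hn0 ltac:(discriminate)) as [e0 [He0 Hz0]].
  pose proof (big_point mr Hm Hmr e0 He0 Hz0) as Hbig.
  set (tau0 := (1 - mr ^ 2) / 16).
  assert (Htau0 : 0 < tau0) by (unfold tau0; apply Rdiv_lt_0_compat; nra).
  assert (Hex : forall tau : R, exists p : R * R, 0 < tau ->
     is_rat (fst p) /\ is_rat (snd p) /\ 0 < fst p < tau /\ (snd p) ^ 2 = gq mr (fst p)).
  { intros tau. destruct (Rlt_or_le 0 tau) as [Ht|Ht].
    - destruct (small_t mr Hm Hmr tau Ht Hbig) as [t [W H]]. exists (t, W). intros; exact H.
    - exists (0, 0). intros; lra. }
  set (f := fun tau => proj1_sig (constructive_indefinite_description _ (Hex tau))).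
  assert (Hf : forall tau, 0 < tau ->
     is_rat (fst (f tau)) /\ is_rat (snd (f tau)) /\ 0 < fst (f tau) < tau /\ (snd (f tau)) ^ 2 = gq mr (fst (f tau))).
  { intros tau Ht. unfold f. destruct (constructive_indefinite_description _ (Hex tau)) as [p Hp]. simpl. auto. }
  set (ts := fix ts (n : nat) : R * R := match n with O => f tau0 | S n => f (fst (ts n)) end).
  assert (Hts : forall n, is_rat (fst (ts n)) /\ is_rat (snd (ts n)) /\ 0 < fst (ts n) < tau0 /\
                  (snd (ts n)) ^ 2 = gq mr (fst (ts n))).
  { induction n.
    - simpl. apply Hf; auto.
    - simpl. destruct IHn as [_ [_ [[H1 H2] _]]].
      destruct (Hf (fst (ts n)) H1) as [A [B [[C D] E]]]. repeat split; auto. lra. }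
  assert (Hdec : forall n, fst (ts (S n)) < fst (ts n)).
  { intros n. simpl. destruct (Hts n) as [_ [_ [[H1 _] _]]]. apply (Hf (fst (ts n)) H1). }
  assert (Hmono : forall i j, (i < j)%nat -> fst (ts j) < fst (ts i)).
  { intros i j Hij. induction Hij.
    - apply Hdec.
    - specialize (Hdec m0). lra. }
  set (T := fun n => tri mr (fst (ts n)) (Rabs (snd (ts n)))).
  assert (HW : forall n, Rabs (snd (ts n)) ^ 2 =
     fst (ts n) ^ 4 - 2 * ((1 - mr ^ 2) / mr) * fst (ts n) ^ 3 - 6 * fst (ts n) ^ 2 +
     2 * ((1 - mr ^ 2) / mr) * fst (ts n) + 1).
  { intros n. destruct (Hts n) as [_ [_ [_ E]]]. rewrite <- Rsqr_pow2, <- Rsqr_abs, Rsqr_pow2, E. reflexivity. }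
  exists T. split.
  - intros n. destruct (Hts n) as [A [B [C E]]].
    apply tri_heron; auto. apply Rabs_pos. rat.
  - intros i j Hij.
    destruct (Hts i) as [Ai [Bi [Ci Ei]]]. destruct (Hts j) as [Aj [Bj [Cj Ej]]].
    destruct (tri_sinh mr (fst (ts i)) (Rabs (snd (ts i))) Hm Ci (Rabs_pos _) ltac:(rat) (HW i))
      as [a1 [b1 [c1 [d1 [e1 [f1 [g1 h1]]]]]]].
    destruct (tri_sinh mr (fst (ts j)) (Rabs (snd (ts j))) Hm Cj (Rabs_pos _) ltac:(rat) (HW j))
      as [a2 [b2 [c2 [d2 [e2 [f2 [g2 h2]]]]]]].
    rewrite <- c1 in a1, b1, d1. rewrite <- c2 in a2, b2, d2.
    assert (Hq : (1 - mr ^ 2) / 8 < (1 - mr ^ 2) / 6).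
    { unfold Rdiv. apply Rmult_lt_compat_l; [nra | lra]. }
    apply (noncong (T i) (T j) _ _ _ _ a1 b1 d1 a2 b2 d2); auto; try lra; try (split; lra).
    set (x := fst (ts i)) in *. set (y := fst (ts j)) in *.
      assert (x <> y).
      { destruct (Nat.lt_total i j) as [H|[H|H]]; [| contradiction |].
        - specialize (Hmono _ _ H). fold x y in Hmono. lra.
        - specialize (Hmono _ _ H). fold x y in Hmono. lra. }
      intro Heq. apply H.
      assert (x < 1 /\ y < 1) as [X1 Y1].
      { unfold tau0 in Ci, Cj. assert ((1 - mr^2)/16 < 1) by (unfold Rdiv; nra). lra. }
      assert (2 * x * (1 + y^2) = 2 * y * (1 + x^2)).
      { assert (2 * x / (1 + x ^ 2) = 2 * y / (1 + y ^ 2)) by exact Heq.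

        apply (Rmult_eq_reg_r (/ ((1 + x^2) * (1 + y^2)))).
        2: apply Rinv_neq_0_compat; nra.
        transitivity (2 * x / (1 + x ^ 2)). field; nra. rewrite H0. field; nra. }
      assert ((x - y) * (1 - x * y) = 0) by nra.
      apply Rmult_integral in H1. destruct H1; [lra|]. nra.
Qed.
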